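(* Let $D$ be a weighted digraph and let $\nu$ be the number of vertices of a longest directed path in $D$. If $\nu$ is odd, then $\mathrm{mac}(D)\ge\left(\frac14+\frac{1}{4\nu}\right)w(D)$; if $\nu$ is even, then $\mathrm{mac}(D)\ge\left(\frac14+\frac{1}{4(\nu-1)}\right)w(D)$.
   Context: A weighted digraph $D=(V,A,w)$ is a digraph without loops or parallel arcs (opposite arcs allowed) with weights $w:A\to\mathbb{R}_{\ge0}$; $w(D)$ is the total arc weight. For a partition $(X,Y)$ of $V$, $w(X,Y)$ is the total weight of arcs from $X$ to $Y$, and $\mathrm{mac}(D)=\max_{(X,Y)}w(X,Y)$ over all partitions. *)

(* Defs.v *)
From mathcomp Require Import all_boot all_order all_algebra.
Set Implicit Arguments. Unset Strict Implicit. Unset Printing Implicit Defensive.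
Import Order.TTheory GRing.Theory Num.Theory.
Local Open Scope ring_scope.

(* A weighted digraph on a finite vertex set V: arc relation [arc]
   (no loops: irreflexive; parallel arcs impossible since a relation;
   opposite arcs allowed), weights [w] on ordered pairs (only values on arcs
   are used). *)

Definition total_weight (R : numDomainType) (V : finType) (arc : rel V)
  (w : V -> V -> R) : R :=
  \sum_(u : V) \sum_(v : V | arc u v) w u v.

Definition cut_weight (R : numDomainType) (V : finType) (arc : rel V)
  (w : V -> V -> R) (X Y : {set V}) : R :=
  \sum_(u in X) \sum_(v in Y | arc u v) w u v.

Definition mac (R : realDomainType) (V : finType) (arc : rel V)
  (w : V -> V -> R) : R :=
  \big[Num.max/0]_(X : {set V}) cut_weight arc w X (~: X).

Definition dipath (V : finType) (arc : rel V) (s : seq V) : bool :=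
  (size s > 0)%N && uniq s && sorted arc s.

Definition longest_path_order (V : finType) (arc : rel V) (nu : nat) : Prop :=
  (exists s, dipath arc s /\ size s = nu) /\
  (forall s, dipath arc s -> (size s <= nu)%N).

(* Main.v *)
Require Import Defs.
From mathcomp Require Import all_boot all_order all_algebra.
From mathcomp Require Import ring lra zify.
Set Implicit Arguments. Unset Strict Implicit. Unset Printing Implicit Defensive.
Import Order.TTheory GRing.Theory Num.Theory.

Section GR.
Variables (V : finType) (arc : rel V).

Lemma connect_add (e : rel V) u v a b :
  connect (fun x y => ((x, y) == (u, v)) || e x y) a b ->
  connect e a b \/ (connect e a u /\ connect e v b).
Proof.
case/connectP => p; elim: p a => [|y p IH] a /=.
  by move=> _ ->; left.
case/andP => /orP [/eqP [-> ->] | eay] Hp Hb.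
  case: (IH _ Hp Hb) => [H | [_ H]]; by right.
case: (IH _ Hp Hb) => [H | [H1 H2]].
  by left; apply: connect_trans (connect1 eay) H.
by right; split => //; apply: connect_trans (connect1 eay) H1.
Qed.

Lemma path_connect_last (e : rel V) x p y :
  path e x p -> y \in x :: p -> connect e y (last x p).
Proof.
elim: p x y => [|z p IH] x y /=.
  by move=> _; rewrite inE => /eqP ->.
case/andP => exz Hp; rewrite inE => /orP [/eqP -> | Hy].
  exact: connect_trans (connect1 exz) (IH z z Hp (mem_head _ _)).
exact: IH z y Hp Hy.
Qed.

Definition goodA (A : {set V * V}) :=
  [forall x, forall y, ((x, y) \in A) ==>
     (arc x y && ~~ connect (fun a b => (a, b) \in A) y x)].

Hypothesis irr : irreflexive arc.
Variable nu : nat.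
Hypothesis Hnu : longest_path_order arc nu.

Lemma gallai_roy : exists c : V -> nat,
  (forall v, c v < nu)%N /\ (forall u v, arc u v -> c u != c v).
Proof.
have g0 : goodA set0 by apply/forallP => x; apply/forallP => y; rewrite inE.
pose A := [arg max_(A > set0 | goodA A) #|A|].
have [A0 gA0 maxA] : extremum_spec geq goodA (fun A => #|A|) A by exact: arg_maxnP.
pose eA := fun a b => (a, b) \in A0.
have gA : forall x y, eA x y -> arc x y && ~~ connect eA y x.
  by move=> x y; move/forallP: gA0 => /(_ x) /forallP /(_ y) /implyP.
have key : forall u v, arc u v -> eA u v || connect eA v u.
  move=> u v auv; apply/negPn/negP; rewrite negb_or => /andP [nuv nvu].
  pose A1 := (u, v) |: A0.
  have gA1 : goodA A1.
    apply/forallP => x; apply/forallP => y; apply/implyP.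
    rewrite in_setU1 => /orP [/eqP [-> ->] | exy].
      rewrite auv /=; apply/negP.
      have -> : connect (fun a b => (a, b) \in A1) =2
                connect (fun x y => ((x, y) == (u, v)) || eA x y).
        by move=> a b; apply: eq_connect => a' b'; rewrite /A1 in_setU1.
      case/connect_add => [H | [H _]]; by rewrite H in nvu.
    have /andP [axy nyx] := gA _ _ exy.
    rewrite axy /=; apply/negP.
    have -> : connect (fun a b => (a, b) \in A1) =2
              connect (fun x y => ((x, y) == (u, v)) || eA x y).
      by move=> a b; apply: eq_connect => a' b'; rewrite /A1 in_setU1.
    case/connect_add => [H | [H1 H2]]; first by rewrite H in nyx.
    have : connect eA v u.
      apply: connect_trans H2 _; apply: connect_trans (connect1 exy) H1.
    by rewrite (negbTE nvu).
  have := maxA _ gA1; rewrite /A1 cardsU1 nuv /=.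
  by rewrite ltnn.
have sub : subrel eA arc by move=> x y /gA /andP [].
pose P v k := [exists x : V, [exists t : k.-tuple V,
   path eA x t && uniq (x :: t) && (last x t == v)]].
have exP : forall v, exists k, P v k.
  move=> v; exists 0%N; apply/existsP; exists v; apply/existsP; exists [tuple].
  by rewrite /= eqxx.
have ubP' : forall v k, P v k -> (k < nu)%N.
  move=> v k /existsP [x /existsP [t /andP [/andP [pt ut] _]]].
  have dp : dipath arc (x :: t) by rewrite /dipath ut /= (sub_path sub pt).
  by have := Hnu.2 _ dp; rewrite /= size_tuple.
have ubP : forall v k, P v k -> (k <= nu)%N by move=> v k /ubP' /ltnW.
pose f v := ex_maxn (exP v) (ubP v).
have fP : forall v, P v (f v) /\ (forall j, P v j -> (j <= f v)%N).
  by move=> v; rewrite /f; case: ex_maxnP.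
have step : forall u v, eA u v -> (f u < f v)%N.
  move=> u v euv.
  have [Pu _] := fP u.
  case/existsP: Pu => x /existsP [t /andP [/andP [pt ut] /eqP lt]].
  have vnot : v \notin x :: t.
    apply/negP => vin; have := path_connect_last pt vin; rewrite lt => cvu.
    by have /andP [_ ncon] := gA _ _ euv; rewrite cvu in ncon.
  have t1 : size (rcons t v) == (f u).+1 by rewrite size_rcons size_tuple.
  apply: (proj2 (fP v)); apply/existsP; exists x; apply/existsP; exists (Tuple t1).
  rewrite /= rcons_path pt lt euv last_rcons eqxx andbT /=.
  by rewrite -/(uniq (x :: rcons t v)) -rcons_cons rcons_uniq vnot ut.
have mono : forall p x, path eA x p -> (f x + size p <= f (last x p))%N.
  elim => [|z p IH] x /=; first by rewrite addn0.
  case/andP => exz pz; have := IH _ pz; have := step _ _ exz.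
  move=> h1 h2; apply: leq_trans h2; rewrite addnS -addSn leq_add2r //.
exists f; split; first by move=> v; exact: ubP' (proj1 (fP v)).
move=> u v auv; case/orP: (key _ _ auv) => [/step h | ].
  by rewrite neq_ltn h.
case/connectP => p pp up.
have neq : u != v by apply/eqP => e; rewrite e irr in auv.
have : (f v + size p <= f u)%N by rewrite up; exact: mono.
case: p pp up => [_ /= e|z p _ _]; first by rewrite e eqxx in neq.
move=> h; rewrite eq_sym neq_ltn; apply/orP; left.
by apply: leq_trans h; rewrite /= addnS ltnS leq_addr.
Qed.
End GR.

Local Open Scope ring_scope.

Lemma count_sets (T : finType) (a b : T) m : a != b ->
  #|[set S : {set T} | (#|S| == m.+1) && (a \in S) && (b \notin S)]|
  = 'C(#|T| - 2, m).
Proof.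
move=> ab.
have -> : [set S : {set T} | (#|S| == m.+1) && (a \in S) && (b \notin S)] =
   (fun S' => a |: S') @: [set S' : {set T} | S' \subset ~: [set a; b] & #|S'| == m].
  apply/setP => S; rewrite inE; apply/idP/imsetP.
    case/andP => [/andP [/eqP cS aS] bS]; exists (S :\ a); last by rewrite setD1K.
    rewrite inE; apply/andP; split.
      apply/subsetP => x; rewrite !inE => /andP [xa xS]; rewrite negb_or xa /=.
      by apply: contraNneq bS => <-.
    by have := cardsD1 a S; rewrite aS cS add1n => -[<-].
  case => S'; rewrite inE => /andP [sub /eqP cS'] ->.
  have aS' : a \notin S' by apply/negP => /(subsetP sub); rewrite !inE eqxx.
  have bS' : b \notin S' by apply/negP => /(subsetP sub); rewrite !inE eqxx orbT.
  rewrite cardsU1 aS' cS' eqxx setU11 /= in_setU1 negb_or bS' andbT.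
  by rewrite eq_sym.
rewrite card_in_imset; last first.
  move=> S1 S2; rewrite !inE => /andP [s1 _] /andP [s2 _] e.
  have aS1 : a \notin S1 by apply/negP => /(subsetP s1); rewrite !inE eqxx.
  have aS2 : a \notin S2 by apply/negP => /(subsetP s2); rewrite !inE eqxx.
  by rewrite -(setU1K aS1) e setU1K.
rewrite cards_draws; congr 'C(_, _).
by have := cardsC [set a; b]; rewrite cards2 ab => <-; rewrite addKn.
Qed.

Lemma le_bigmax0 (R : realDomainType) (I : eqType) (r : seq I) (F : I -> R) i :
  i \in r -> F i <= \big[Num.max/0]_(j <- r) F j.
Proof.
elim: r => [|y r IH] //; rewrite inE big_cons => /orP [/eqP -> | ir].
  by rewrite le_max lexx.
by rewrite le_max IH ?orbT.
Qed.

Lemma le_mac (R : realDomainType) (V : finType) (arc : rel V) (w : V -> V -> R) X :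
  cut_weight arc w X (~: X) <= mac arc w.
Proof.
by rewrite /mac; apply: (le_bigmax0 (fun X => cut_weight arc w X (~: X))); exact: mem_index_enum.
Qed.

Lemma avg (R : realFieldType) (V : finType) (arc : rel V) (w : V -> V -> R) n
  (c : V -> 'I_n.+2) m :
  (forall u v, arc u v -> c u != c v) ->
  'C(n, m)%:R * total_weight arc w <= 'C(n.+2, m.+1)%:R * mac arc w.
Proof.
move=> proper.
pose X (S : {set 'I_n.+2}) := [set v | c v \in S].
have E : forall S, cut_weight arc w (X S) (~: X S) =
   \sum_u \sum_(v | arc u v) (if (c u \in S) && (c v \notin S) then w u v else 0).
  move=> S; rewrite /cut_weight big_mkcond; apply: eq_bigr => u _.
  rewrite inE; case: (c u \in S) => /=.
    rewrite big_mkcond [RHS]big_mkcond; apply: eq_bigr => v _.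
    by rewrite !inE; case: (c v \in S); case: (arc u v).
  by rewrite big1 // => v _.
have H : \sum_(S : {set 'I_n.+2} | #|S| == m.+1) cut_weight arc w (X S) (~: X S)
   <= \sum_(S : {set 'I_n.+2} | #|S| == m.+1) mac arc w.
  by apply: ler_sum => S _; exact: le_mac.
have H2 : \sum_(S : {set 'I_n.+2} | #|S| == m.+1) mac arc w =
          \sum_(S in [set S : {set 'I_n.+2} | #|S| == m.+1]) mac arc w.
  by apply: eq_bigl => S; rewrite inE.
move: H; rewrite H2 sumr_const card_draws card_ord => H; rewrite -mulr_natl in H; apply: le_trans _ H.
rewrite le_eqVlt; apply/orP; left; apply/eqP; apply/esym.
rewrite (eq_bigr _ (fun S _ => E S)) exchange_big /total_weight mulr_sumr.
apply: eq_bigr => u _; rewrite exchange_big mulr_sumr; apply: eq_bigr => v auv.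
rewrite -big_mkcondr.
rewrite (eq_bigl (mem [set S : {set 'I_n.+2} | (#|S| == m.+1) && (c u \in S) && (c v \notin S)])); last first.
  by move=> S; rewrite !inE andbA.
by rewrite sumr_const count_sets ?proper // card_ord subn2 /= mulr_natl.
Qed.

Lemma arith (R : realFieldType) (A B W M t : R) :
  0 < B -> t * B = A -> A * W <= B * M -> t * W <= M.
Proof.
move=> B0 tB H; rewrite -(ler_pM2l B0) mulrA (mulrC B t) tB //.
Qed.

Lemma binid n m : ('C(n.+2, m.+1) * (m.+1 * (n.+1 - m)) = 'C(n, m) * (n.+2 * n.+1))%N.
Proof.
have h1 := mul_bin_diag n.+2 m; have h2 := mul_bin_down n.+1 m; simpl in h1, h2.
rewrite mulnA (mulnC _ m.+1) -h1 -mulnA (mulnC _ (n.+1 - m)%N) -h2.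
by rewrite mulnA mulnC.
Qed.

Lemma odd_case (R : realFieldType) m :
  (4%:R^-1 + (4%:R * (m.*2.+3)%:R)^-1) * ('C(m.*2.+3, m.+1))%:R = ('C(m.*2.+1, m))%:R :> R.
Proof.
have I := binid (m.*2.+1) m.
have e : (m.*2.+2 - m = m.+2)%N by rewrite -addnn; lia.
rewrite e in I.
move/(congr1 (fun k => k%:R : R)): I; rewrite !natrM.
set A := ('C(_, _))%:R; set B := ('C(_, _))%:R => I.
have e3 : ((m.*2.+3)%:R : R) = m%:R * 2 + 3 by rewrite -muln2 -addn3 natrD natrM.
have e2 : ((m.*2.+2)%:R : R) = m%:R * 2 + 2 by rewrite -muln2 -addn2 natrD natrM.
have e1 : ((m.+1)%:R : R) = m%:R + 1 by rewrite -addn1 natrD.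
have e2' : ((m.+2)%:R : R) = m%:R + 2 by rewrite -addn2 natrD.
rewrite e3 e2 e1 e2' in I *.
have x0 : 0 <= m%:R :> R by [].
have nz : (m%:R + 1) * (m%:R + 2) != 0 :> R.
  by rewrite mulf_eq0 negb_or !gt_eqF //; lra.
apply: (mulIf nz); rewrite -mulrA I.
field.
by rewrite gt_eqF //; lra.
Qed.

Lemma even_case (R : realFieldType) m :
  (4%:R^-1 + (4%:R * ((m.*2.+2)%:R - 1))^-1) * ('C(m.*2.+2, m.+1))%:R = ('C(m.*2, m))%:R :> R.
Proof.
have I := binid (m.*2) m.
have e : (m.*2.+1 - m = m.+1)%N by rewrite -addnn; lia.
rewrite e in I.
move/(congr1 (fun k => k%:R : R)): I; rewrite !natrM.
set A := ('C(_, _))%:R; set B := ('C(_, _))%:R => I.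
have e2 : ((m.*2.+2)%:R : R) = m%:R * 2 + 2 by rewrite -muln2 -addn2 natrD natrM.
have e1' : ((m.*2.+1)%:R : R) = m%:R * 2 + 1 by rewrite -muln2 -addn1 natrD natrM.
have e1 : ((m.+1)%:R : R) = m%:R + 1 by rewrite -addn1 natrD.
rewrite e2 e1 e1' in I *.
have x0 : 0 <= m%:R :> R by [].
have nz : (m%:R + 1) * (m%:R + 1) != 0 :> R.
  by rewrite mulf_eq0 negb_or !gt_eqF //; lra.
apply: (mulIf nz); rewrite -mulrA I.
field.
by rewrite gt_eqF //; lra.
Qed.

Theorem mainTheorem3 (R : realFieldType) (V : finType) (arc : rel V)
  (w : V -> V -> R) (nu : nat) :
  irreflexive arc ->
  (forall u v, arc u v -> 0 <= w u v) ->
  longest_path_order arc nu ->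
  (odd nu ->
     mac arc w >= (4%:R^-1 + (4%:R * nu%:R)^-1) * total_weight arc w) /\
  (~~ odd nu ->
     mac arc w >= (4%:R^-1 + (4%:R * (nu%:R - 1))^-1) * total_weight arc w).
Proof.
move=> irr wpos Hnu.
have [c [cb cp]] := gallai_roy irr Hnu.
have mac0 : 0 <= mac arc w by have := le_mac arc w set0; rewrite /cut_weight big_set0.
case: nu Hnu cb => [|[|n]] Hnu cb.
- exfalso; case: Hnu.1 => s [/andP [/andP [s0 _] _] e].
  by rewrite e in s0.
- have W0 : total_weight arc w = 0.
    rewrite /total_weight big1 // => u _; rewrite big1 // => v auv.
    have := cp u v auv; have := cb u; have := cb v.
    by rewrite !ltnS !leqn0 => /eqP -> /eqP ->; rewrite eqxx.
  by split => _; rewrite W0 mulr0.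
- pose c' v : 'I_n.+2 := Ordinal (cb v).
  have cp' : forall u v, arc u v -> c' u != c' v by move=> u v /cp.
  have hn := odd_double_half n.
  split => on.
  + have on' : odd n by move: on => /=; rewrite negbK.
    rewrite on' add1n in hn.
    have H := avg (c:=c') w (n./2) cp'.
    move: H hn; move: (n./2) => m H hn; subst n.
    apply: arith H; first by rewrite ltr0n bin_gt0 -addnn; lia.
    exact: odd_case.
  + have on' : ~~ odd n by move: on => /=; rewrite negbK.
    rewrite (negbTE on') add0n in hn.
    have H := avg (c:=c') w (n./2) cp'.
    move: H hn; move: (n./2) => m H hn; subst n.
    apply: arith H; first by rewrite ltr0n bin_gt0 -addnn; lia.
    exact: even_case.
Qed.
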